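(* Let $X$ be a nontrivial real Banach space with dual $X^*$. The following assertions are equivalent: (i) $X$ is weakly octahedral; (ii) whenever $E$ is a finite-dimensional subspace of $X$, $x^*\in B_{X^*}$, and $\varepsilon>0$, there is a $y\in S_X$ such that $\|x+ty\|\geq(1-\varepsilon)(|x^*(x)|+t)$ for all $x\in S_E$ and $t>0$; (ii') whenever $n\in\mathbb{N}$, $x_1,\dots,x_n\in S_X$, $x^*\in B_{X^*}$, and $\varepsilon>0$, there is a $y\in S_X$ such that $\|x_i+ty\|\geq(1-\varepsilon)(|x^*(x_i)|+t)$ for all $i\in\{1,\dots,n\}$ and $t>0$; (iii) whenever $n\in\mathbb{N}$, $x_1,\dots,x_n\in S_X$, $x^*\in B_{X^*}$, and $\varepsilon>0$, there is a $y\in S_X$ such that $\|x_i+ty\|\geq(1-\varepsilon)(|x^*(x_i)|+t)$ for all $i\in\{1,\dots,n\}$ and $t\geq\varepsilon$.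
   Context: $B_X$, $S_X$ denote the closed unit ball and unit sphere of $X$; similarly for $X^*$. The norm on $X$ (or $X$ itself) is called weakly octahedral if for every finite-dimensional subspace $E$ of $X$, every $x^*\in B_{X^*}$, and every $\varepsilon>0$, there is a $y\in S_X$ such that $\|x+y\|\geq(1-\varepsilon)(|x^*(x)|+\|y\|)$ for all $x\in E$. *)

(* Defs.v *)
From HB Require Import structures.
From mathcomp Require Import all_boot all_order all_algebra.
From mathcomp Require Import all_classical all_reals all_analysis.
Set Implicit Arguments. Unset Strict Implicit. Unset Printing Implicit Defensive.
Import Order.TTheory GRing.Theory Num.Theory.
Import numFieldNormedType.Exports.
Local Open Scope classical_set_scope.
Local Open Scope ring_scope.

(* A real Banach space is modelled as a complete normed module over a
   realType R (every realType is the real line). *)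

(* x^* \in B_{X^*}: a linear functional of norm at most 1
   (such a functional is automatically continuous). *)
Definition in_dual_ball (R : realType) (X : normedModType R) (f : X -> R) : Prop :=
  (forall (a : R) (x y : X), f (a *: x + y) = a * f x + f y) /\
  (forall x : X, `|f x| <= `|x|).

Definition fin_dim_subspace (R : realType) (X : normedModType R) (E : set X) : Prop :=
  exists (n : nat) (v : 'I_n -> X),
    E = [set x | exists c : 'I_n -> R, x = \sum_(i < n) c i *: v i].

Definition nontrivial (R : realType) (X : normedModType R) : Prop :=
  exists x : X, x != 0.

Definition weakly_octahedral (R : realType) (X : normedModType R) : Prop :=
  forall (E : set X) (f : X -> R) (eps : R),
    fin_dim_subspace E -> in_dual_ball f -> 0 < eps ->
    exists y : X, `|y| = 1 /\
      forall x : X, E x -> (1 - eps) * (`|f x| + `|y|) <= `|x + y|.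

Definition cond_ii (R : realType) (X : normedModType R) : Prop :=
  forall (E : set X) (f : X -> R) (eps : R),
    fin_dim_subspace E -> in_dual_ball f -> 0 < eps ->
    exists y : X, `|y| = 1 /\
      forall (x : X) (t : R), E x -> `|x| = 1 -> 0 < t ->
        (1 - eps) * (`|f x| + t) <= `|x + t *: y|.

Definition cond_ii' (R : realType) (X : normedModType R) : Prop :=
  forall (n : nat) (xs : 'I_n -> X) (f : X -> R) (eps : R),
    (forall i, `|xs i| = 1) -> in_dual_ball f -> 0 < eps ->
    exists y : X, `|y| = 1 /\
      forall (i : 'I_n) (t : R), 0 < t ->
        (1 - eps) * (`|f (xs i)| + t) <= `|xs i + t *: y|.

Definition cond_iii (R : realType) (X : normedModType R) : Prop :=
  forall (n : nat) (xs : 'I_n -> X) (f : X -> R) (eps : R),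
    (forall i, `|xs i| = 1) -> in_dual_ball f -> 0 < eps ->
    exists y : X, `|y| = 1 /\
      forall (i : 'I_n) (t : R), eps <= t ->
        (1 - eps) * (`|f (xs i)| + t) <= `|xs i + t *: y|.

(* Main.v *)
Require Import Defs.
From HB Require Import structures.
From mathcomp Require Import all_boot all_order all_algebra.
From mathcomp Require Import all_classical all_reals all_analysis.
From mathcomp Require Import ring lra finmap.
Import Order.TTheory GRing.Theory Num.Theory.
Import numFieldNormedType.Exports.
Set Implicit Arguments. Unset Strict Implicit. Unset Printing Implicit Defensive.
Local Open Scope ring_scope.

Section Lin.
Variables (R : realType) (X : normedModType R).

Definition lin n (v : 'I_n -> X) (c : 'rV[R]_n) : X := \sum_(i < n) c ord0 i *: v i.

Lemma linP n (v : 'I_n -> X) a c d : lin v (a *: c + d) = a *: lin v c + lin v d.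
Proof.
rewrite /lin scaler_sumr -big_split; apply: eq_bigr => i _.
by rewrite !mxE scalerDl scalerA.
Qed.

Lemma lin0 n (v : 'I_n -> X) : lin v 0 = 0.
Proof. by rewrite /lin big1 // => i _; rewrite mxE scale0r. Qed.

Lemma linZ n (v : 'I_n -> X) a c : lin v (a *: c) = a *: lin v c.
Proof. by rewrite -[a *: c]addr0 linP lin0 addr0. Qed.

Lemma linB n (v : 'I_n -> X) c d : lin v (c - d) = lin v c - lin v d.
Proof. by rewrite addrC -scaleN1r linP scaleN1r addrC. Qed.

Lemma coord_le n (c : 'rV[R]_n) i : `|c ord0 i| <= `|c|.
Proof.
have /mapP[j Hj ->] : `|c ord0 i| \in [seq `|c x.1 x.2| | x : 'I_1 * 'I_n].
  by apply/mapP; exists (ord0, i) => //=; rewrite mem_enum.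
by rewrite [leRHS]/Num.norm /= mx_normrE; apply/bigmax_geP; right => /=; exists j.
Qed.

Lemma mxnorm_le n (c : 'rV[R]_n) B : 0 <= B -> (forall i, `|c ord0 i| <= B) -> `|c| <= B.
Proof.
move=> B0 H; rewrite [leLHS]/Num.norm /= mx_normrE; apply: bigmax_le => // -[i j] _ /=.
by rewrite (ord1 i).
Qed.

Lemma lin_lip n (v : 'I_n -> X) c : `|lin v c| <= (\sum_i `|v i|) * `|c|.
Proof.
apply: (le_trans (ler_norm_sum _ _ _)); rewrite mulr_suml; apply: ler_sum => i _.
by rewrite normrZ mulrC ler_wpM2l // coord_le.
Qed.

Lemma lin_cont n (v : 'I_n -> X) : continuous (lin v).
Proof.
move=> c; apply: (proj2 (@cvgrPdist_lt _ X _ (nbhs c) _ (lin v) (lin v c))) => e e0; apply: (proj2 (@nbhs_normP _ _ c _)).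
set K := \sum_i `|v i|.
have K0 : 0 <= K by apply: sumr_ge0 => i _.
exists (e / (K + 1)); first by rewrite /= divr_gt0 // ltr_wpDl.
move=> d /=; rewrite -linB => cd.
apply: (le_lt_trans (lin_lip _ _)).
have : K * `|c - d| <= K * (e / (K + 1)) by rewrite ler_wpM2l // ltW.
move/le_lt_trans; apply.
rewrite mulrA ltr_pdivrMr ?ltr_wpDl //; nra.
Qed.

End Lin.

Section KL.
Variables (R : realType) (X : normedModType R).

Lemma box_compactB n (B : R) : compact [set d : 'rV[R]_n | forall i, `|d ord0 i| <= B].
Proof.
have := @rV_compact _ n (fun=> `[(-B : R), B]%classic) (fun=> @segment_compact _ _ _).
congr compact; apply/funext => d /=; apply/propext; split => H i; have := H i.
  by rewrite /= in_itv /= -ler_norml.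
by rewrite /= in_itv /= -ler_norml.
Qed.

Lemma KL n (v : 'I_n -> X) : exists M : R, 0 <= M /\ forall c, exists c',
  lin v c' = lin v c /\ `|c'| <= M * `|lin v c|.
Proof.
elim: n v => [|n IH] v.
  exists 0; split => // c; exists 0; rewrite /lin !big_ord0 normr0 mul0r; split => //.
case: (pselect (exists d : 'rV[R]_n.+1, d != 0 /\ lin v d = 0)) => [[d [dn0 ld0]]|Hind].
  have [i di] : exists i, d ord0 i != 0.
    apply: contra_notP (negP dn0) => /forallNP H; apply/eqP/rowP => j.
    by rewrite mxE; have := H j; case: eqP.
  have [M [M0 HM]] := IH (fun k => v (lift i k)).
  exists M; split => // c.
  pose e := c - (c ord0 i / d ord0 i) *: d.
  have le : lin v e = lin v c by rewrite /e linB linZ ld0 scaler0 subr0.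
  have ei : e ord0 i = 0 by rewrite /e !mxE divfK // subrr.
  pose c2 : 'rV_n := \row_k e ord0 (lift i k).
  have l2 : lin (fun k => v (lift i k)) c2 = lin v e.
    rewrite /lin [in RHS](bigD1_ord i) //= ei scale0r add0r.
    by apply: eq_bigr => k _; rewrite mxE.
  have [c3 [l3 n3]] := HM c2.
  pose c' : 'rV_n.+1 := \row_j (if unlift i j is Some k then c3 ord0 k else 0).
  exists c'; split.
    rewrite -le -l2 -l3 /lin.
    rewrite (bigD1_ord i) //=.
    idtac.
    rewrite /c' !mxE unlift_none scale0r add0r.
    by apply: eq_bigr => k _; rewrite !mxE liftK.
  apply: (@le_trans _ _ `|c3|).
    apply: mxnorm_le => // j; rewrite /c' mxE; case: unlift => [k|]; first exact: coord_le.
    by rewrite normr0.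
  by rewrite -le -l2.
pose A := [set d : 'rV[R]_n.+1 | `|d| = 1]%classic.
have A1 : A (const_mx 1).
  rewrite /A /=; apply/le_anti/andP; split.
    by apply: mxnorm_le => // j; rewrite mxE normr1.
  by have := coord_le (const_mx (1:R) : 'rV_n.+1) ord0; rewrite mxE normr1.
have cA : compact A.
  apply: (subclosed_compact _ (box_compactB (n:=n.+1) (B:=1))).
    apply: (@preimage_closed _ R (fun d : 'rV[R]_n.+1 => `|d|) [set x | x = 1]%classic); last exact: closed_eq.
    move=> d _.
    exact: norm_continuous.
  by move=> d Ad i; rewrite -Ad coord_le.
have cf : {within A, continuous (fun d => `|lin v d|)}%classic.
  apply: continuous_subspaceT => d.
  have h := (@continuous_comp _ _ _ (lin v) (fun x : X => `|x|) d (@lin_cont _ _ _ v d) (@norm_continuous _ X (lin v d))).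
  exact: h.
have [d0 d0A d0min] := EVT_min_rV (ex_intro _ _ A1) cA cf.
move: d0A; rewrite in_setE /A /= => d0n.
set m := `|lin v d0| in d0min.
have m0 : 0 < m.
  rewrite normr_gt0; apply/negP => /eqP l0; apply: Hind; exists d0; split => //.
  by apply/negP => /eqP d00; move: d0n; rewrite d00 normr0 => /eqP; rewrite eq_sym oner_eq0.
exists m^-1; split; first by rewrite invr_ge0 ltW.
move=> c; exists c; split => //.
have [->|cn0] := eqVneq c 0; first by rewrite normr0 mulr_ge0 // invr_ge0 ltW.
have a0 : 0 < `|c| by rewrite normr_gt0.
have dA : `|c|^-1 *: c \in A.
  by rewrite in_setE /A /= normrZ ger0_norm ?invr_ge0 ?ltW // mulVf // gt_eqF.
have ai : 0 <= `|c|^-1 by rewrite invr_ge0 ltW.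
have := d0min _ dA; rewrite linZ normrZ (ger0_norm ai) => H.
have H2 : m * `|c| <= `|lin v c|.
  by move: H; rewrite -(ler_pM2r a0) mulrAC mulVf ?gt_eqF // mul1r.
by rewrite mulrC ler_pdivlMr // mulrC.
Qed.


Lemma net n (v : 'I_n -> X) (del : R) : 0 < del -> exists k (u : 'I_k -> X),
  forall c, `|lin v c| <= 1 -> exists j, `|lin v c - u j| < del.
Proof.
move=> d0.
have [M [M0 HM]] := KL v.
set K := \sum_i `|v i|.
have K0 : 0 <= K by apply: sumr_ge0 => i _.
set eta := del / (K + 1).
have eta0 : 0 < eta by rewrite divr_gt0 // ltr_wpDl.
have cC := box_compactB (n:=n) (B:=M).
rewrite compact_cover in cC.
have op : forall d : 'rV[R]_n, [set d : 'rV[R]_n | forall i, `|d ord0 i| <= M]%classic d -> open (ball d eta).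
  by move=> d _; exact: ball_open.
have cov : ([set d : 'rV[R]_n | forall i, `|d ord0 i| <= M] `<=` cover [set d : 'rV[R]_n | forall i, `|d ord0 i| <= M] (fun d => ball d eta))%classic.
  by move=> d Cd; exists d => //; exact: ballxx.
have [D' D'sub Cov] := cC _ _ _ op cov.
pose s := enum_fset D'.
exists (size s), (fun j => lin v (nth 0 s j)) => c c1.
have [c' [lc' nc']] := HM c.
have Cc' : forall i, `|c' ord0 i| <= M.
  move=> i; apply: (le_trans (coord_le c' i)); apply: (le_trans nc').
  by rewrite ler_piMr.
have [e eD be] := Cov c' Cc'.
have es : e \in s by [].
have ji : (index e s < size s)%N by rewrite index_mem.
exists (Ordinal ji); rewrite /= nth_index // -lc' -linB.
rewrite -ball_normE /= in be.
apply: (le_lt_trans (lin_lip _ _)).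
have : K * `|c' - e| <= K * eta by rewrite distrC ler_wpM2l // ltW.
move/le_lt_trans; apply.
rewrite /eta mulrA ltr_pdivrMr ?ltr_wpDl //; nra.
Qed.

End KL.

Section Dirs.
Variables (R : realType) (X : normedModType R).

Lemma f0 (f : X -> R) : in_dual_ball f -> f 0 = 0.
Proof. by move=> [_ Hn]; apply/eqP; rewrite -normr_le0; have := Hn 0; rewrite normr0. Qed.

Lemma fZ (f : X -> R) a x : in_dual_ball f -> f (a *: x) = a * f x.
Proof. by move=> Hf; have [Hl _] := Hf; rewrite -[a *: x]addr0 Hl f0 // addr0. Qed.

Lemma fB (f : X -> R) x y : in_dual_ball f -> f (x - y) = f x - f y.
Proof.
move=> Hf; have [Hl _] := Hf.
by rewrite addrC -scaleN1r Hl mulN1r addrC.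
Qed.

Lemma scale_id (t : R) (x y : X) : 0 < t -> x + t *: y = t *: (t^-1 *: x + y).
Proof. by move=> t0; rewrite scalerDr scalerA mulfV ?gt_eqF // scale1r. Qed.

Lemma wo_ii : weakly_octahedral X -> cond_ii X.
Proof.
move=> H E f eps HE Hf e0.
have [y [y1 Hy]] := H E f eps HE Hf e0.
exists y; split => // x t Ex x1 t0.
have Ex' : E (t^-1 *: x).
  move: HE Ex => [n [v ->]] [c ->]; exists (fun i => t^-1 * c i).
  by rewrite scaler_sumr; apply: eq_bigr => i _; rewrite scalerA.
have := Hy _ Ex'.
rewrite y1 (scale_id x y t0) normrZ (gtr0_norm t0) (fZ t^-1 x Hf) normrM.
have ti : 0 < t^-1 by rewrite invr_gt0.
rewrite (gtr0_norm ti) => H1.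
set a := `|f x| in H1 *.
set N := `|t^-1 *: x + y| in H1 *.
have -> : (1 - eps) * (a + t) = t * ((1 - eps) * (t^-1 * a + 1)).
  by field; rewrite gt_eqF.
by rewrite ler_wpM2l // ltW.
Qed.

Lemma ii_ii' : cond_ii X -> cond_ii' X.
Proof.
move=> H n xs f eps hx Hf e0.
have [|y [y1 Hy]] := H [set x | exists c : 'I_n -> R, x = \sum_(i < n) c i *: xs i]%classic f eps _ Hf e0.
  by exists n, xs.
exists y; split => // i t t0; apply: Hy => //.
exists (fun j => (j == i)%:R).
rewrite (bigD1 i) //= eqxx scale1r big1 ?addr0 // => j /negbTE ->.
by rewrite scale0r.
Qed.

Lemma ii'_iii : cond_ii' X -> cond_iii X.
Proof.
move=> H n xs f eps hx Hf e0.
have [y [y1 Hy]] := H n xs f eps hx Hf e0.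
exists y; split => // i t et; apply: Hy; exact: lt_le_trans et.
Qed.

End Dirs.

Section Hard.
Variables (R : realType) (X : normedModType R).

Lemma iii_wo : nontrivial X -> cond_iii X -> weakly_octahedral X.
Proof.
move=> [x0 x0n] H3 E f eps [n [v ->]] Hf e0.
have nx0 : 0 < `|x0| by rewrite normr_gt0.
pose e := `|x0|^-1 *: x0.
have e1 : `|e| = 1 by rewrite normrZ gtr0_norm ?invr_gt0 // mulVf ?gt_eqF.
have fle : forall z, `|f z| <= `|z| by case: Hf.
have [eps1|epsl1] := leP 1 eps.
  exists e; split => // x _; rewrite e1.
  apply: (@le_trans _ _ 0); last exact: normr_ge0.
  have := normr_ge0 (f x); nra.
pose e' := eps / 4.
have e'0 : 0 < e' by rewrite divr_gt0.
pose del := eps * eps / 32.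
have del0 : 0 < del by rewrite divr_gt0 // mulr_gt0.
have [k [u Hu]] := net v del0.
pose xs := fun j => if u j == 0 then e else `|u j|^-1 *: u j.
have hx : forall j, `|xs j| = 1.
  move=> j; rewrite /xs; case: eqP => // /eqP ujn.
  by rewrite normrZ gtr0_norm ?invr_gt0 ?normr_gt0 // mulVf // normr_eq0.
have [y [y1 Hy]] := H3 k xs f e' hx Hf e'0.
exists y; split => // x [c ->].
have -> : \sum_(i < n) c i *: v i = lin v (\row_i c i).
  by rewrite /lin; apply: eq_bigr => i _; rewrite mxE.
move: (\row_i c i) => c'.
have [->|xn0] := eqVneq (lin v c') 0.
  by rewrite add0r y1 f0 // normr0 add0r mulr1; lra.
pose s := `|lin v c'|.
have s0 : 0 < s by rewrite normr_gt0.
pose t := s^-1.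
have t0 : 0 < t by rewrite invr_gt0.
pose u0 := t *: lin v c'.
have u01 : `|u0| = 1 by rewrite normrZ gtr0_norm // mulVf // gt_eqF.
have hn : `|lin v (t *: c')| <= 1 by rewrite linZ -/u0 u01.
have [j hj] := Hu (t *: c') hn.
rewrite linZ -/u0 in hj.
have a1 : `|f u0| <= 1 by rewrite -u01 fle.
have a0 : 0 <= `|f u0| by [].
have claim : (1 - eps) * (`|f u0| + t) <= `|u0 + t *: y|.
  have [te|et] := ltP t e'.
    have : 1 - t <= `|u0 + t *: y|.
      by have := lerB_normD u0 (t *: y); rewrite u01 normrZ y1 gtr0_norm // mulr1.
    rewrite /e' in te; nra.
  have hy := Hy j t et.
  have ujn : u j != 0.
    apply/eqP => uj0; move: hj; rewrite uj0 subr0 u01 /del => h; nra.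
  have xsj : xs j = `|u j|^-1 *: u j by rewrite /xs (negbTE ujn).
  have w0 : 0 < `|u j| by rewrite normr_gt0.
  have d2 : `|u j - xs j| <= `|u0 - u j|.
    rewrite xsj -{1}(scale1r (u j)) -scalerBl normrZ.
    rewrite -[X in _ * X](gtr0_norm w0) -normrM mulrBl mul1r mulVf ?gt_eqF //.
    by rewrite -u01 distrC ler_dist_dist.
  have d1 : `|u0 - xs j| < 2 * del.
    apply: (le_lt_trans (ler_distD (u j) _ _)); lra.
  have fd : `|f u0| - 2 * del <= `|f (xs j)|.
    have h6 : `|f u0| - `|f (xs j)| <= 2 * del.
      apply: (le_trans (lerB_dist (f u0) (f (xs j)))); rewrite -fB //.
      exact: (le_trans (fle _) (ltW d1)).
    by rewrite lerBlDr -lerBlDl.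
  have nd : `|xs j + t *: y| <= `|u0 - xs j| + `|u0 + t *: y|.
    by have := ler_normD (xs j - u0) (u0 + t *: y); rewrite addrA subrK distrC.
  have h1 : (1 - e') * (`|f u0| - 2 * del + t) <= (1 - e') * (`|f (xs j)| + t).
    by rewrite ler_wpM2l ?lerD2r // /e'; lra.
  have h2 : eps * e' <= eps * t by rewrite ler_wpM2l // ltW.
  have h3 : 0 <= eps * `|f u0| by rewrite mulr_ge0 // ltW.
  rewrite /e' /del in h1 h2 d1 hy; nra.
have ex : lin v c' = s *: u0 by rewrite scalerA mulfV ?gt_eqF // scale1r.
have ey : lin v c' + y = s *: (u0 + t *: y).
  rewrite ex scalerDr scalerA /t mulfV ?gt_eqF // scale1r.
  by rewrite scalerA mulfV ?gt_eqF // scale1r.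
rewrite y1 ey normrZ (gtr0_norm s0) ex (fZ s u0 Hf) normrM (gtr0_norm s0).
have -> : (1 - eps) * (s * `|f u0| + 1) = s * ((1 - eps) * (`|f u0| + t)).
  by rewrite /t; field; rewrite gt_eqF.
by rewrite ler_wpM2l // ltW.
Qed.

End Hard.

Theorem proposition2p5 (R : realType) (X : completeNormedModType R) :
  nontrivial X ->
  (weakly_octahedral X <-> cond_ii X) /\
  (weakly_octahedral X <-> cond_ii' X) /\
  (weakly_octahedral X <-> cond_iii X).
Proof.
move=> nt.
have h1 := @wo_ii R X; have h2 := @ii_ii' R X; have h3 := @ii'_iii R X.
have h4 := @iii_wo R X nt.
split; [|split]; split => H.
- exact: h1.
- exact: h4 (h3 (h2 H)).
- exact: h2 (h1 H).
- exact: h4 (h3 H).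
- exact: h3 (h2 (h1 H)).
- exact: h4 H.
Qed.
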